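(* Let $G$ be a graph, $\mathcal{C}=\{1,\dots,q\}$ a set of colors, $\lambda:E(G)\to 2^{\mathcal{C}}\setminus\{\emptyset\}$, and $\gamma:\{(e,c)\mid e\in E(G),c\in\lambda(e)\}\to\mathbb{Q}_{\ge 0}$. Construct $G'$ as follows: for each $c\in\mathcal{C}$ let $G_c$ be a copy of $G$ with vertex set $V(G_c)=\{v_c\mid v\in V(G)\}$ containing exactly the edges $\{v_c,w_c\}$ with $\{v,w\}\in E(G)$ and $c\in\lambda(\{v,w\})$, of weight $\gamma'(\{v_c,w_c\})=\gamma(\{v,w\},c)$; for each $v\in V(G)$ add an independent set $J(v)$ of $q-1$ new vertices and all edges $\{v_c,x\}$ for $c\in\mathcal{C}$, $x\in J(v)$, each of weight $0$. Let $J=\bigcup_{v\in V(G)}J(v)$, partition $V(G')$ as $V(G_1)\uplus\dots\uplus V(G_q)\uplus J$, and let $H'$ be the graph with vertex set $\{V(G_1),\dots,V(G_q),J\}$ whose edges are exactly one self-loop $\{V(G_c),V(G_c)\}$ for each $c\in\mathcal{C}$. Then for every $\ell$, $G$ has a perfect over-the-rainbow matching of weight $\ell$ if and only if $G'$ has a perfect conjoining matching (with respect to $H'$ and this partition) of weight $\ell$.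
   Context: A perfect over-the-rainbow matching of $G$ is a pair $(M,\xi)$ where $M$ is a perfect matching of $G$ and $\xi:M\to\mathcal{C}$ is surjective with $\xi(e)\in\lambda(e)$ for all $e\in M$; its weight is $\sum_{e\in M}\gamma(e,\xi(e))$. Given a graph $G'$ with edge weights, a partition $V(G')=V_1\uplus\dots\uplus V_t$, and a graph $H'$ (possibly with self-loops) on vertex set $\{V_1,\dots,V_t\}$, a perfect conjoining matching is a perfect matching $M'$ of $G'$ such that for every edge $\{V_i,V_j\}\in E(H')$ (with $i=j$ for a self-loop) there is an edge $\{u,v\}\in M'$ with $u\in V_i$ and $v\in V_j$; its weight is the sum of the weights of its edges. *)

(* Defs.v *)
From mathcomp Require Import all_boot all_order all_algebra.
Set Implicit Arguments. Unset Strict Implicit. Unset Printing Implicit Defensive.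
Import Order.TTheory GRing.Theory Num.Theory.
Local Open Scope ring_scope.

Definition simple_edges (V : finType) (E : {set {set V}}) : bool :=
  [forall e in E, #|e| == 2%N].

Definition perfect_matching (V : finType) (E M : {set {set V}}) : bool :=
  (M \subset E) && [forall v : V, #|[set f in M | v \in f]| == 1%N].

Definition over_the_rainbow (V : finType) (q : nat) (E : {set {set V}})
    (lam : {set V} -> {set 'I_q}) (M : {set {set V}}) (xi : {set V} -> 'I_q) : Prop :=
  perfect_matching E M /\
  (forall e, e \in M -> xi e \in lam e) /\
  (forall c : 'I_q, exists2 e, e \in M & xi e = c).

Definition otr_weight (V : finType) (q : nat) (gam : {set V} -> 'I_q -> rat)
    (M : {set {set V}}) (xi : {set V} -> 'I_q) : rat :=
  \sum_(e in M) gam e (xi e).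

(* Perfect conjoining matching of (V', E') w.r.t. a partition of V' given by
   part : V' -> P (the block containing a vertex) and a graph H' on the blocks
   whose edges are given as pairs (i, j) (i = j for a self-loop). *)
Definition conjoining (V' P : finType) (E' M : {set {set V'}})
    (part : V' -> P) (H : {set P * P}) : bool :=
  perfect_matching E' M &&
  [forall ij in H, [exists f in M, exists u, exists v,
     [&& u \in f, v \in f, u != v, part u == ij.1 & part v == ij.2]]].

Definition set_weight (V' : finType) (w : {set V'} -> rat) (M : {set {set V'}}) : rat :=
  \sum_(f in M) w f.

(* The construction of G'.  Vertices: inl (v, c) is v_c in G_c;
   inr (v, j) (j < q - 1) are the q - 1 vertices of J(v). *)
Definition Vp (V : finType) (q : nat) : finType := ((V * 'I_q) + (V * 'I_q.-1))%type.

Definition copy_edge (V : finType) (q : nat) (e : {set V}) (c : 'I_q) : {set Vp V q} :=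
  [set inl (x, c) | x in e].

Definition Ep (V : finType) (q : nat) (E : {set {set V}}) (lam : {set V} -> {set 'I_q})
    : {set {set Vp V q}} :=
  [set f : {set Vp V q} | [exists e in E, exists c : 'I_q,
       (c \in lam e) && (f == copy_edge e c)]]
  :|: [set f : {set Vp V q} | [exists v : V, exists c : 'I_q, exists j : 'I_q.-1,
       f == [set inl (v, c); inr (v, j)]]].

(* gamma'({v_c, w_c}) = gamma({v,w}, c); edges incident to J get weight 0. *)
Definition gamp (V : finType) (q : nat) (E : {set {set V}}) (lam : {set V} -> {set 'I_q})
    (gam : {set V} -> 'I_q -> rat) (f : {set Vp V q}) : rat :=
  match [pick ec : {set V} * 'I_q |
           [&& ec.1 \in E, ec.2 \in lam ec.1 & f == copy_edge ec.1 ec.2]] with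
  | Some ec => gam ec.1 ec.2
  | None => 0
  end.

(* Partition of V(G'): block Some c is V(G_c), block None is J. *)
Definition partp (V : finType) (q : nat) (x : Vp V q) : option 'I_q :=
  match x with inl (_, c) => Some c | inr _ => None end.

Definition Hp (q : nat) : {set option 'I_q * option 'I_q} :=
  [set (Some c, Some c) | c : 'I_q].

(* Main.v *)
Require Import Defs.
From mathcomp Require Import all_boot all_order all_algebra zify.
Import Order.TTheory GRing.Theory Num.Theory.
Set Implicit Arguments. Unset Strict Implicit. Unset Printing Implicit Defensive.
Local Open Scope ring_scope.


Section H.
Variables (V : finType) (q : nat).

Lemma mem_copy_inl (e : {set V}) c y c' :
  (inl (y, c') \in copy_edge (q:=q) e c) = (y \in e) && (c' == c).
Proof.
apply/imsetP/andP => [[x xe [-> ->]]|[ye /eqP ->]]; first by [].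
by exists y.
Qed.

Lemma mem_copy_inr (e : {set V}) c z :
  (inr z \in copy_edge (q:=q) e c) = false.
Proof. by apply/imsetP => -[x _]. Qed.

Lemma copy_inj (e e' : {set V}) c c' : e != set0 ->
  copy_edge (q:=q) e c = copy_edge e' c' -> e = e' /\ c = c'.
Proof.
case/set0Pn => y ye H.
have : inl (y, c) \in copy_edge (q:=q) e' c' by rewrite -H mem_copy_inl ye eqxx.
rewrite mem_copy_inl => /andP[_ /eqP cc]; subst c'.
split => //; apply: (imset_inj (f := fun x : V => (inl (x, c) : Vp V q))) => //.
by move=> a b [].
Qed.

Lemma PM_uniq (T : finType) (E M : {set {set T}}) x f1 f2 :
  perfect_matching E M -> f1 \in M -> f2 \in M -> x \in f1 -> x \in f2 -> f1 = f2.
Proof.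
case/andP => _ /forallP /(_ x) /cards1P [f0 Hf] m1 m2 x1 x2.
have : f1 \in [set f in M | x \in f] by rewrite inE m1 x1.
have : f2 \in [set f in M | x \in f] by rewrite inE m2 x2.
by rewrite Hf !inE => /eqP -> /eqP ->.
Qed.

Lemma PM_ex (T : finType) (E M : {set {set T}}) x :
  perfect_matching E M -> exists2 f, f \in M & x \in f.
Proof.
case/andP => _ /forallP /(_ x) /cards1P [f0 Hf].
have : f0 \in [set f in M | x \in f] by rewrite Hf set11.
by rewrite inE => /andP[]; exists f0.
Qed.

Lemma PM_intro (T : finType) (E M : {set {set T}}) :
  M \subset E -> (forall x, exists f0, f0 \in M /\ x \in f0 /\ forall f, f \in M -> x \in f -> f = f0) ->
  perfect_matching E M.
Proof.
move=> sME H; apply/andP; split => //; apply/forallP => x.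
case: (H x) => f0 [m0 [x0 u]]; apply/cards1P; exists f0.
apply/setP => f; rewrite !inE; apply/andP/eqP => [[]|->]; first exact: u.
by [].
Qed.

Lemma Ep_cases (E : {set {set V}}) lam f : f \in Ep (q:=q) E lam ->
  (exists e c, [/\ e \in E, c \in lam e & f = copy_edge e c]) \/
  (exists v c j, f = [set inl (v, c); inr (v, j)]).
Proof.
rewrite inE !inE => /orP [/existsP [e /andP [eE /existsP [c /andP [cl /eqP ->]]]]|].
  by left; exists e, c.
by move=> /existsP [v /existsP [c /existsP [j /eqP ->]]]; right; exists v, c, j.
Qed.

Lemma memJ_inl v c j w d :
  (inl (w, d) \in ([set inl (v, c); inr (v, j)] : {set Vp V q})) = (w == v) && (d == c).
Proof.
rewrite !inE orbF; apply/eqP/andP => [[-> ->]|[/eqP -> /eqP ->]] //.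
Qed.

Lemma memJ_inr v c j w k :
  (inr (w, k) \in ([set inl (v, c); inr (v, j)] : {set Vp V q})) = (w == v) && (k == j).
Proof.
rewrite !inE /=; apply/eqP/andP => [[-> ->]|[/eqP -> /eqP ->]] //.
Qed.

End H.

Section H.
Variables (V : finType) (q : nat) (E : {set {set V}})
    (lam : {set V} -> {set 'I_q}) (gam : {set V} -> 'I_q -> rat).

Lemma simple_nz e : simple_edges E -> e \in E -> e != set0.
Proof.
move=> /forallP /(_ e) /implyP H /H /eqP c2; apply/set0Pn.
by case/cards2P: (introT eqP c2) => x [y [_ ->]]; exists x; rewrite set21.
Qed.

Lemma gamp_copy e c : simple_edges E -> e \in E -> c \in lam e ->
  gamp E lam gam (copy_edge e c) = gam e c.
Proof.
move=> sE eE cl; rewrite /gamp; case: pickP => [[e' c'] /= /and3P [e'E _ /eqP H]|].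
  by case: (copy_inj (simple_nz sE eE) H) => -> ->.
by move/(_ (e, c)); rewrite /= eE cl eqxx.
Qed.

Lemma gamp_J (f : {set Vp V q}) z : inr z \in f -> gamp E lam gam f = 0.
Proof.
move=> zf; rewrite /gamp; case: pickP => [[e' c'] /= /and3P [_ _ /eqP H]|//].
by move: zf; rewrite H mem_copy_inr.
Qed.

Lemma weightW (M : {set {set V}}) xi (M' : {set {set Vp V q}}) :
  simple_edges E -> M \subset E -> (forall e, e \in M -> xi e \in lam e) ->
  [set copy_edge e (xi e) | e in M] \subset M' ->
  (forall f, f \in M' -> f \notin [set copy_edge e (xi e) | e in M] -> exists z, inr z \in f) ->
  set_weight (gamp E lam gam) M' = otr_weight gam M xi.
Proof.
move=> sE sME xl sub rest; rewrite /set_weight /otr_weight.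
rewrite (bigID (fun f => f \in [set copy_edge e (xi e) | e in M])) /=.
rewrite [X in _ + X]big1 ?addr0; last first.
  by move=> f /andP [fM nf]; case: (rest f fM nf) => z; apply: gamp_J.
rewrite (eq_bigl (fun f => f \in [set copy_edge e (xi e) | e in M])); last first.
  move=> f; apply/andP/idP => [[]//|H]; split => //; exact: (subsetP sub).
rewrite big_imset /=; last first.
  move=> e1 e2 m1 m2 H.
  by case: (copy_inj (simple_nz sE (subsetP sME _ m1)) H).
apply: eq_bigr => e m; apply: gamp_copy => //; [exact: (subsetP sME) | exact: xl].
Qed.
End H.

Section H.
Variables (V : finType) (q : nat) (E : {set {set V}})
    (lam : {set V} -> {set 'I_q.+1}).

Lemma key (M' : {set {set Vp V q.+1}}) v :
  perfect_matching (Ep E lam) M' ->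
  exists c0, (exists e : {set V}, [/\ e \in E, c0 \in lam e, v \in e & copy_edge e c0 \in M']) /\
     (forall (e : {set V}) (c : 'I_q.+1), v \in e -> copy_edge e c \in M' -> c = c0).
Proof.
move=> PM; have sub := subsetP (proj1 (andP PM)).
pose S := [set c : 'I_q.+1 | [exists j : 'I_q, [set inl (v, c); inr (v, j)] \in M']].
have gex : forall j : 'I_q, exists c, [set inl (v, c); inr (v, j)] \in M'.
  move=> j; case: (PM_ex (inr (v, j) : Vp V q.+1) PM) => f fM jf.
  case: (Ep_cases (sub _ fM)) => [[e [c [_ _ fe]]]|[w [c [j' fe]]]].
    by move: jf; rewrite fe mem_copy_inr.
  move: jf; rewrite fe memJ_inr => /andP[/eqP wv /eqP jj]; subst.
  by exists c.
pose g j := odflt ord0 [pick c | [set inl (v, c); inr (v, j)] \in M'].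
have gP : forall j, [set inl (v, g j); inr (v, j)] \in M'.
  move=> j; rewrite /g; case: pickP => [c //|H]; case: (gex j) => c.
  by rewrite H.
have SE : S = [set g j | j in setT].
  apply/setP => c; rewrite inE; apply/existsP/imsetP => [[j Hj]|[j _ ->]].
    exists j => //; have := PM_uniq (x := inr (v, j) : Vp V q.+1) PM Hj (gP j).
    rewrite !memJ_inr !eqxx => /(_ isT isT) H.
    have := memJ_inl (q := q.+1) v c j v c; rewrite H memJ_inl !eqxx /=.
    by move=> /eqP.
  by exists j.
have ginj : injective g.
  move=> j1 j2 gg; have := PM_uniq (x := inl (v, g j1) : Vp V q.+1) PM (gP j1) (gP j2).
  rewrite !memJ_inl gg !eqxx => /(_ isT isT) H.
  have := memJ_inr (q := q.+1) v (g j2) j1 v j1; rewrite H memJ_inr !eqxx /=.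
  by move=> /eqP.
have cS : #|S| = q by rewrite SE card_imset // cardsT card_ord.
have : #|~: S| == 1%N.
  by have := cardsC S; rewrite cS card_ord; move=> H; apply/eqP; lia.
case/cards1P => c0 Sc.
have c0S : c0 \notin S by rewrite -in_setC Sc set11.
have neS : forall c, c != c0 -> c \in S.
  by move=> c; apply: contraR; rewrite -in_setC Sc in_set1.
have copyS : forall (e : {set V}) c, v \in e -> copy_edge e c \in M' -> c \notin S.
  move=> e c ve cM; apply/negP; rewrite inE => /existsP [j Hj].
  have := PM_uniq (x := inl (v, c) : Vp V q.+1) PM cM Hj.
  rewrite mem_copy_inl memJ_inl ve !eqxx => /(_ isT isT) H.
  by have := memJ_inr (q := q.+1) v c j v j; rewrite -H mem_copy_inr !eqxx.
exists c0; split; last first.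
  move=> e c ve cM; apply/eqP; apply: contraR (copyS e c ve cM); exact: neS.
case: (PM_ex (inl (v, c0) : Vp V q.+1) PM) => f fM cf.
case: (Ep_cases (sub _ fM)) => [[e [c [eE cl fe]]]|[w [c [j fe]]]].
  move: cf; rewrite fe mem_copy_inl => /andP [ve /eqP cc]; subst.
  by exists e.
move: cf; rewrite fe memJ_inl => /andP[/eqP wv /eqP cc]; subst.
by move: c0S; rewrite inE; case/existsP; exists j.
Qed.
End H.
Unset Implicit Arguments. Set Strict Implicit.

Theorem lemma9 (V : finType) (q : nat) (E : {set {set V}})
    (lam : {set V} -> {set 'I_q}) (gam : {set V} -> 'I_q -> rat) :
  (0 < q)%N ->
  simple_edges E ->
  (forall e, e \in E -> lam e != set0) ->
  (forall e c, e \in E -> c \in lam e -> 0 <= gam e c) ->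
  forall l : rat,
    (exists M xi, over_the_rainbow E lam M xi /\ otr_weight gam M xi = l) <->
    (exists M' : {set {set Vp V q}},
        conjoining (Ep E lam) M' (@partp V q) (Hp q) /\
        set_weight (gamp E lam gam) M' = l).
Proof.
case: q lam gam => [//|q] lam gam _ sE _ _ l; split.
- case=> M [xi [[PM [xl surj]] <-]].
  have sME := proj1 (andP PM).
  pose ev v := odflt set0 [pick e in M | v \in e].
  have evP : forall v, ev v \in M /\ v \in ev v.
    move=> v; rewrite /ev; case: pickP => [e /andP [] //|H].
    by case: (PM_ex v PM) => e eM ve; move: (H e); rewrite eM ve.
  have evU : forall v e, e \in M -> v \in e -> e = ev v.
    move=> v e eM ve; case: (evP v) => m1 v1; exact: (PM_uniq PM eM m1 ve v1).
  pose cv v := xi (ev v).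
  pose Mc := [set copy_edge e (xi e) | e in M].
  pose MJ := [set f : {set Vp V q.+1} | [exists v, exists j : 'I_q,
                 f == [set inl (v, lift (cv v) j); inr (v, j)]]].
  have MJP : forall f, reflect (exists v j, f = [set inl (v, lift (cv v) j); inr (v, j)]) (f \in MJ).
    move=> f; rewrite inE; apply: (iffP existsP) => [[v /existsP [j /eqP ->]]|[v [j ->]]].
      by exists v, j.
    by exists v; apply/existsP; exists j.
  exists (Mc :|: MJ); split; last first.
    apply: weightW => //; first exact: subsetUl.
    move=> f; rewrite in_setU => /orP [->//|/MJP [v [j ->]] _].
    by exists (v, j); rewrite memJ_inr !eqxx.
  apply/andP; split.
    apply: PM_intro.
      apply/subsetP => f; rewrite inE => /orP [/imsetP [e eM ->]|/MJP [v [j ->]]].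
        rewrite !inE; apply/orP; left; apply/existsP; exists e.
        rewrite (subsetP sME) //=; apply/existsP; exists (xi e); by rewrite xl ?eqxx.
      rewrite !inE; apply/orP; right; apply/existsP; exists v; apply/existsP.
      by exists (lift (cv v) j); apply/existsP; exists j.
    case=> [[v c]|[v j]].
    + case: (eqVneq c (cv v)) => [->|ne].
        exists (copy_edge (ev v) (cv v)); split.
          by rewrite in_setU; apply/orP; left; apply: imset_f; case: (evP v).
        split; first by rewrite mem_copy_inl eqxx andbT; case: (evP v).
        move=> f; rewrite in_setU => /orP [/imsetP [e eM ->]|/MJP [w [j ->]]].
          rewrite mem_copy_inl => /andP [ve /eqP cc].
          by rewrite (evU v e eM ve) /cv.
        rewrite memJ_inl => /andP [/eqP wv /eqP cc]; subst w.
        by move: (neq_lift (cv v) j); rewrite -cc eqxx.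
      have ne2 : cv v != c by rewrite eq_sym.
      case: (unlift_some ne2) => j cj _.
      exists [set inl (v, c); inr (v, j)]; split.
        by rewrite in_setU; apply/orP; right; apply/MJP; exists v, j; rewrite cj.
      split; first by rewrite memJ_inl !eqxx.
      move=> f; rewrite in_setU => /orP [/imsetP [e eM ->]|/MJP [w [j' ->]]].
        rewrite mem_copy_inl => /andP [ve /eqP cc].
        by move: ne; rewrite cc (evU v e eM ve) eqxx.
      rewrite memJ_inl => /andP [/eqP wv /eqP cc]; subst w.
      by rewrite cj in cc; rewrite -(lift_inj cc) -cj.
    + exists [set inl (v, lift (cv v) j); inr (v, j)]; split.
        by rewrite in_setU; apply/orP; right; apply/MJP; exists v, j.
      split; first by rewrite memJ_inr !eqxx.
      move=> f; rewrite in_setU => /orP [/imsetP [e eM ->]|/MJP [w [j' ->]]].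
        by rewrite mem_copy_inr.
      by rewrite memJ_inr => /andP [/eqP wv /eqP jj]; subst.
  apply/forallP => ij; apply/implyP => /imsetP [c _ ->].
  case: (surj c) => e eM xe.
  have : #|e| == 2%N by move: sE => /forallP /(_ e) /implyP; apply; exact: (subsetP sME).
  case/cards2P => u [w [uw ee]].
  apply/existsP; exists (copy_edge e c); rewrite in_setU -xe (imset_f (fun e => copy_edge e (xi e))) //=.
  apply/existsP; exists (inl (u, xi e)); apply/existsP; exists (inl (w, xi e)).
  rewrite !mem_copy_inl ee !inE !eqxx /= orbT /=.
  rewrite andbT; apply/negP => /eqP [] uw2; by rewrite uw2 eqxx in uw.
- case=> M' [/andP [PM HH] <-].
  have sub := subsetP (proj1 (andP PM)).
  have K := fun v => key (E := E) (lam := lam) v PM.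
  pose M := [set e in E | [exists c in lam e, copy_edge e c \in M']].
  pose xi e := odflt ord0 [pick c in lam e | copy_edge e c \in M'].
  have xiP : forall e, e \in M -> xi e \in lam e /\ copy_edge e (xi e) \in M'.
    move=> e; rewrite inE => /andP [_ /existsP [c /andP [cl cM]]].
    rewrite /xi; case: pickP => [c' /andP [] //|H].
    by move: (H c); rewrite cl cM.
  have xiU : forall e c, e \in M -> copy_edge e c \in M' -> xi e = c.
    move=> e c eM cM; have eE : e \in E by move: eM; rewrite inE => /andP [].
    case/set0Pn: (simple_nz sE eE) => v ve.
    case: (K v) => c0 [_ U]; rewrite (U _ _ ve cM); apply: (U _ _ ve); exact: (proj2 (xiP e eM)).
  have MP : forall e c, e \in E -> c \in lam e -> copy_edge e c \in M' -> e \in M.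
    by move=> e c eE cl cM; rewrite inE eE; apply/existsP; exists c; rewrite cl.
  exists M, xi; split; last first.
    symmetry; apply: weightW => //.
    + by apply/subsetP => e; rewrite inE => /andP [].
    + by move=> e /xiP [].
    + by apply/subsetP => f /imsetP [e eM ->]; case: (xiP e eM).
    move=> f fM nf; case: (Ep_cases (sub _ fM)) => [[e [c [eE cl fe]]]|[v [c [j fe]]]].
      have eM : e \in M by apply: (MP e c eE cl); rewrite -fe.
      have cM : copy_edge e c \in M' by rewrite -fe.
      by move: nf; rewrite fe -(xiU e c eM cM) (imset_f (fun e => copy_edge e (xi e))) .
    by exists (v, j); rewrite fe memJ_inr !eqxx.
  split; [|split].
  + apply: PM_intro; first by apply/subsetP => e; rewrite inE => /andP [].
    move=> v; case: (K v) => c0 [[e0 [e0E c0l ve0 cM0]] U].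
    exists e0; split; first exact: (MP e0 c0).
    split => // e eM ve.
    case: (xiP e eM) => _ cM; have ce := U _ _ ve cM; rewrite ce in cM.
    have := PM_uniq (x := inl (v, c0) : Vp V q.+1) PM cM cM0.
    rewrite !mem_copy_inl ve ve0 eqxx => /(_ isT isT) H.
    have nz : e != set0 by apply/set0Pn; exists v.
    by case: (copy_inj nz H).
  + by move=> e /xiP [].
  move=> c; have : (Some c, Some c) \in Hp q.+1 by apply: imset_f.
  move: HH => /forallP /(_ (Some c, Some c)) /implyP H /H {H} /existsP [f /andP [fM]].
  move=> /existsP [u /existsP [w /and5P [uf wf uw /eqP pu /eqP pw]]].
  case: (Ep_cases (sub _ fM)) => [[e [c' [eE cl fe]]]|[v [c' [j fe]]]].
    move: u uf uw pu => [[y d]|z]; last by [].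
    rewrite fe mem_copy_inl => /andP [_ /eqP ->] _ [cc]; subst c'.
    subst f; have eM := MP e c eE cl fM.
    by exists e => //; apply: xiU.
  move: u w uf wf uw pu pw => [[y d]|z] [[y' d']|z'] //.
  rewrite fe !memJ_inl => /andP [/eqP -> /eqP ->] /andP [/eqP -> /eqP ->].
  by rewrite eqxx.
Qed.
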